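(* Let $I\subset\mathbb{R}$ be an interval, let $(a_i)_{i\ge1}$ be a real sequence with all $a_i\in I$, and let $\psi:I\to\mathbb{R}$ be a non-decreasing convex function. Then $T_a\subset T_{\psi(a)}$, where $\psi(a)=(\psi(a_i))_{i\ge1}$.
   Context: For a real sequence $(x_i)$, $\Delta x_i=x_{i+1}-x_i$. ''Increasing'' means strictly increasing. For a real sequence $a=(a_i)$, $T_a$ denotes the set of increasing real sequences $t=(t_i)$ with the same index set such that $(\Delta a_i/\Delta t_i)$ is non-decreasing. *)

(* Defs.v *)
From Stdlib Require Import Reals.
Open Scope R_scope.

(* Sequences indexed by nat (index 0 plays the role of the paper's index 1). *)
Definition Delta (x : nat -> R) (i : nat) : R := x (S i) - x i.

Definition increasing_seq (t : nat -> R) : Prop := forall i, t i < t (S i).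

Definition T_set (a : nat -> R) (t : nat -> R) : Prop :=
  increasing_seq t /\
  forall i, Delta a i / Delta t i <= Delta a (S i) / Delta t (S i).

Definition is_interval (I : R -> Prop) : Prop :=
  forall x y z, I x -> I y -> x <= z <= y -> I z.

Definition nondecreasing_on (I : R -> Prop) (f : R -> R) : Prop :=
  forall x y, I x -> I y -> x <= y -> f x <= f y.

Definition convex_on (I : R -> Prop) (f : R -> R) : Prop :=
  forall x y l, I x -> I y -> 0 <= l <= 1 ->
    f (l * x + (1 - l) * y) <= l * f x + (1 - l) * f y.

(* Main.v *)
Require Import Defs.
From Stdlib Require Import Reals Lra Psatz.
Open Scope R_scope.

Lemma three_pt (I : R -> Prop) (psi : R -> R) u v w :
  convex_on I psi -> I u -> I w -> u <= v -> v <= w ->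
  (psi v - psi u) * (w - v) <= (psi w - psi v) * (v - u).
Proof.
  intros Hc Hu Hw H1 H2.
  destruct (Req_dec u w) as [E|E].
  { subst. assert (v = w) by lra. subst. lra. }
  set (l := (w - v) / (w - u)).
  assert (Hl : 0 <= l <= 1).
  { unfold l; split.
    - unfold Rdiv; apply Rmult_le_pos; [lra|]; left; apply Rinv_0_lt_compat; lra.
    - apply (Rmult_le_reg_r (w - u)); [lra|]. unfold Rdiv.
      rewrite Rmult_assoc, Rinv_l by lra. lra. }
  assert (Hv : l * u + (1 - l) * w = v).
  { unfold l. field_simplify; [|lra]. field. lra. }
  pose proof (Hc u w l Hu Hw Hl) as H. rewrite Hv in H.
  assert (Hl2 : l * (w - u) = w - v).
  { unfold l. field. lra. }
  assert (H' : (w - u) * psi v <= (w - u) * (l * psi u + (1 - l) * psi w)).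
  { apply Rmult_le_compat_l; lra. }
  nra.
Qed.

Theorem corollary3p2 (I : R -> Prop) (a : nat -> R) (psi : R -> R) :
  is_interval I ->
  (forall i, I (a i)) ->
  nondecreasing_on I psi ->
  convex_on I psi ->
  forall t : nat -> R, T_set a t -> T_set (fun i => psi (a i)) t.
Proof.
  intros _ HI Hm Hc t [Ht Hs]. split; [exact Ht|]. intro i.
  specialize (Hs i). pose proof (Ht i) as T1. pose proof (Ht (S i)) as T2.
  unfold Defs.Delta in Hs |- *.
  set (x := a i) in *. set (y := a (S i)) in *. set (z := a (S (S i))) in *.
  set (s1 := t (S i) - t i) in *. set (s2 := t (S (S i)) - t (S i)) in *.
  assert (P1 : 0 < s1) by (unfold s1; lra).
  assert (P2 : 0 < s2) by (unfold s2; lra).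
  assert (Ix : I x) by apply HI. assert (Iy : I y) by apply HI.
  assert (Iz : I z) by apply HI.
  assert (K : (y - x) * s2 <= (z - y) * s1).
  { apply (Rmult_le_compat_r (s1 * s2)) in Hs; [|nra].
    replace ((y - x) / s1 * (s1 * s2)) with ((y - x) * s2) in Hs by (field; lra).
    replace ((z - y) / s2 * (s1 * s2)) with ((z - y) * s1) in Hs by (field; lra).
    exact Hs. }
  set (A := psi y - psi x). set (B := psi z - psi y).
  assert (G : A * s2 <= B * s1).
  { destruct (Rle_or_lt x y) as [Hxy|Hxy].
    - assert (Hyz : y <= z) by nra.
      assert (A0 : 0 <= A) by (unfold A; pose proof (Hm x y Ix Iy Hxy); lra).
      assert (B0 : 0 <= B) by (unfold B; pose proof (Hm y z Iy Iz Hyz); lra).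
      pose proof (three_pt I psi x y z Hc Ix Iz Hxy Hyz) as C. fold A B in C.
      destruct (Req_dec x y) as [E|E].
      + assert (A = 0) by (unfold A; rewrite E; lra). nra.
      + assert (D : 0 < y - x) by lra.
        apply (Rmult_le_reg_r (y - x)); [lra|]. nra.
    - assert (A0 : A <= 0) by (unfold A; pose proof (Hm y x Iy Ix (Rlt_le _ _ Hxy)); lra).
      destruct (Rle_or_lt y z) as [Hyz|Hyz].
      + assert (B0 : 0 <= B) by (unfold B; pose proof (Hm y z Iy Iz Hyz); lra). nra.
      + pose proof (three_pt I psi z y x Hc Iz Ix (Rlt_le _ _ Hyz) (Rlt_le _ _ Hxy)) as C.
        assert (C' : B * (y - x) <= A * (z - y)) by (unfold A, B; nra).
        assert (E1 : A * ((y - x) * s2) >= A * ((z - y) * s1)) by nra.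
        apply (Rmult_le_reg_r (x - y)); [lra|]. nra. }
  apply (Rmult_le_reg_r (s1 * s2)); [nra|].
  replace (A / s1 * (s1 * s2)) with (A * s2) by (field; lra).
  replace (B / s2 * (s1 * s2)) with (B * s1) by (field; lra).
  exact G.
Qed.
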